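(* In the setting described in the context, for every $\theta\in\Theta$ one has $H_\theta\le C_\Upsilon(\theta)$, with equality if and only if $\langle w_j'(\theta)|w_k(\theta)\rangle=0$ for all $j,k$ (including $j=k$) with $p_j(\theta)>0$ and $p_k(\theta)>0$.
   Context: Let $\Theta\subseteq\mathbb{R}$ be an open interval and $D\ge1$. For $\theta\in\Theta$ let $\Phi_\theta$ be a quantum channel on $D\times D$ complex matrices and $\rho_0=|\psi_0\rangle\langle\psi_0|$ a fixed pure input state. Canonical Kraus operators are $D\times D$ matrices $\Upsilon_1(\theta),\dots,\Upsilon_D(\theta)$, differentiable in $\theta$, with $\sum_k\Upsilon_k^\dagger\Upsilon_k=\mathbb{I}$, $\Phi_\theta(\rho)=\sum_k\Upsilon_k\rho\Upsilon_k^\dagger$, and $\mathrm{tr}\{\Upsilon_k\rho_0\Upsilon_j^\dagger\}=\delta_{jk}p_k(\theta)$. Write $\Upsilon_k(\theta)|\psi_0\rangle=\sqrt{p_k(\theta)}|w_k(\theta)\rangle$ with $\{|w_k(\theta)\rangle\}$ an orthonormal basis of $\mathbb{C}^D$ differentiable in $\theta$, so the output is $\rho_\theta=\sum_kp_k|w_k\rangle\langle w_k|$. Each $p_k$ is assumed either identically zero or strictly positive on $\Theta$. Primes denote $d/d\theta$. $C_\Upsilon(\theta)=4\sum_k\mathrm{tr}\{\Upsilon_k'\rho_0\Upsilon_k'^\dagger\}$. $H_\theta=\mathrm{tr}\{\rho_\theta\lambda^2\}$ is the SLD quantum information of $\rho_\theta$, $\lambda$ any Hermitian solution of $d\rho_\theta/d\theta=\frac12(\rho_\theta\lambda+\lambda\rho_\theta)$.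 *)

(* Defs.v *)
From Stdlib Require Import Reals.
From HB Require Import structures.
From mathcomp Require Import all_boot all_order all_algebra.
From mathcomp Require Import complex Rstruct.

Set Implicit Arguments.
Unset Strict Implicit.
Unset Printing Implicit Defensive.

Import Order.TTheory GRing.Theory Num.Theory.
Local Open Scope ring_scope.

Notation Cplx := (R[i]).

Definition adj (m n : nat) (A : 'M[Cplx]_(m, n)) : 'M[Cplx]_(n, m) :=
  (map_mx Num.conj A)^T.

Definition braket (n : nat) (a b : 'cV[Cplx]_n) : Cplx := (adj a *m b) ord0 ord0.

Definition ketbra (n : nat) (a b : 'cV[Cplx]_n) : 'M[Cplx]_n := a *m adj b.

Definition hermitian (n : nat) (A : 'M[Cplx]_n) : Prop := adj A = A.

Definition Theta_open_interval (Th : R -> Prop) : Prop :=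
  (exists x, Th x) /\
  (forall x y z : R, Th x -> Th z -> (x <= y)%R -> (y <= z)%R -> Th y) /\
  (forall x, Th x -> exists e : R, (0 < e)%R /\
     forall y, (Rabs (y - x) < e)%R -> Th y).

Definition cderiv_at (f : R -> Cplx) (f' : Cplx) (t : R) : Prop :=
  derivable_pt_lim (fun s => complex.Re (f s)) t (complex.Re f') /\
  derivable_pt_lim (fun s => complex.Im (f s)) t (complex.Im f').

Definition mderiv_at (m n : nat) (F : R -> 'M[Cplx]_(m, n)) (F' : 'M[Cplx]_(m, n))
    (t : R) : Prop :=
  forall i j, cderiv_at (fun s => F s i j) (F' i j) t.

Definition is_SLD (n : nat) (rho drho lam : 'M[Cplx]_n) : Prop :=
  hermitian lam /\ drho = 2^-1 *: (rho *m lam + lam *m rho).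

Definition SLD_info (n : nat) (rho lam : 'M[Cplx]_n) : Cplx := \tr (rho *m lam *m lam).

Definition cR (x : R) : Cplx := Complex x 0.

(* Main.v *)
Require Import Defs.
From Stdlib Require Import Reals.
From HB Require Import structures.
From mathcomp Require Import all_boot all_order all_algebra.
From mathcomp Require Import complex Rstruct.
From mathcomp Require Import ring lra.
Import Order.TTheory GRing.Theory Num.Theory.
Local Open Scope ring_scope.


Set Implicit Arguments.
Unset Strict Implicit.


Lemma ReD (x y : Cplx) : complex.Re (x + y) = complex.Re x + complex.Re y.
Proof. by case: x; case: y. Qed.
Lemma ImD (x y : Cplx) : complex.Im (x + y) = complex.Im x + complex.Im y.
Proof. by case: x; case: y. Qed.
Lemma ReM (x y : Cplx) : complex.Re (x * y) = complex.Re x * complex.Re y - complex.Im x * complex.Im y.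
Proof. by case: x; case: y. Qed.
Lemma ImM (x y : Cplx) : complex.Im (x * y) = complex.Re x * complex.Im y + complex.Im x * complex.Re y.
Proof. by case: x => a b; case: y => c d /=. Qed.
Lemma ReJ (x : Cplx) : complex.Re (x^*) = complex.Re x.
Proof. by case: x. Qed.
Lemma ImJ (x : Cplx) : complex.Im (x^*) = - complex.Im x.
Proof. by case: x. Qed.
Lemma Re0 : complex.Re (0 : Cplx) = 0. Proof. by []. Qed.
Lemma Im0 : complex.Im (0 : Cplx) = 0. Proof. by []. Qed.

Lemma cplx_ext (x y : Cplx) : complex.Re x = complex.Re y -> complex.Im x = complex.Im y -> x = y.
Proof. by case: x => a b; case: y => c d /= -> ->. Qed.

Lemma dpl_conv (f g : R -> R) t l l' :
  derivable_pt_lim f t l -> (forall z, f z = g z) -> l = l' -> derivable_pt_lim g t l'.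
Proof. move=> h e <-; exact: derivable_pt_lim_ext e h. Qed.

Lemma cderiv_add (f g : R -> Cplx) f' g' t :
  cderiv_at f f' t -> cderiv_at g g' t -> cderiv_at (fun s => f s + g s) (f' + g') t.
Proof.
move=> [h1 h2] [h3 h4]; split.
- eapply dpl_conv; [exact: (derivable_pt_lim_plus _ _ _ _ _ h1 h3) | move=> z | ].
    by rewrite ReD.
  by rewrite ReD.
- eapply dpl_conv; [exact: (derivable_pt_lim_plus _ _ _ _ _ h2 h4) | move=> z | ].
    by rewrite ImD.
  by rewrite ImD.
Qed.

Lemma cderiv_mul (f g : R -> Cplx) f' g' t :
  cderiv_at f f' t -> cderiv_at g g' t ->
  cderiv_at (fun s => f s * g s) (f' * g t + f t * g') t.
Proof.
move=> [h1 h2] [h3 h4]; split.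
- eapply dpl_conv; [exact: (derivable_pt_lim_minus _ _ _ _ _
     (derivable_pt_lim_mult _ _ _ _ _ h1 h3) (derivable_pt_lim_mult _ _ _ _ _ h2 h4)) | move=> z | ].
    by rewrite ReM.
  rewrite ReD !ReM /= !RealsE; ring.
- eapply dpl_conv; [exact: (derivable_pt_lim_plus _ _ _ _ _
     (derivable_pt_lim_mult _ _ _ _ _ h1 h4) (derivable_pt_lim_mult _ _ _ _ _ h2 h3)) | move=> z | ].
    by rewrite ImM.
  rewrite ImD !ImM /= !RealsE; ring.
Qed.

Lemma cderiv_conj (f : R -> Cplx) f' t :
  cderiv_at f f' t -> cderiv_at (fun s => (f s)^*) (f'^*) t.
Proof.
move=> [h1 h2]; split.
- eapply dpl_conv; [exact: h1 | move=> z | ]; by rewrite ReJ.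
- eapply dpl_conv; [exact: (derivable_pt_lim_opp _ _ _ h2) | move=> z | ]; by rewrite ImJ.
Qed.

Lemma cderiv_const (c : Cplx) t : cderiv_at (fun _ => c) 0 t.
Proof.
split.
- eapply dpl_conv; [exact: (derivable_pt_lim_const (complex.Re c) t) | move=> z; reflexivity | reflexivity ].
- eapply dpl_conv; [exact: (derivable_pt_lim_const (complex.Im c) t) | move=> z; reflexivity | reflexivity ].
Qed.

Lemma cderiv_ext (f g : R -> Cplx) f' t :
  (forall s, f s = g s) -> cderiv_at f f' t -> cderiv_at g f' t.
Proof.
move=> e [h1 h2]; split.
- eapply dpl_conv; [exact: h1 | move=> z /=; by rewrite e | by []].
- eapply dpl_conv; [exact: h2 | move=> z /=; by rewrite e | by []].
Qed.

Lemma cderiv_sum (I : Type) (r : seq I) (F : I -> R -> Cplx) (F' : I -> Cplx) t :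
  (forall i, cderiv_at (F i) (F' i) t) ->
  cderiv_at (fun s => \sum_(i <- r) F i s) (\sum_(i <- r) F' i) t.
Proof.
move=> h; elim: r => [|a r IH].
  rewrite big_nil; apply: (@cderiv_ext (fun _ => 0)); last exact: cderiv_const.
  by move=> s; rewrite big_nil.
rewrite big_cons; apply: (@cderiv_ext (fun s => F a s + \sum_(i <- r) F i s)).
  by move=> s; rewrite big_cons.
exact: cderiv_add.
Qed.

Lemma open_nbhd (Th : R -> Prop) t : Theta_open_interval Th -> Th t ->
  exists a b, (Rlt a t /\ Rlt t b) /\ forall z, (Rlt a z /\ Rlt z b) -> Th z.
Proof.
move=> [_ [_ Ho]] Ht; have [e [he He]] := Ho t Ht.
exists (t - e), (t + e); split.
  by split; apply/RltP; lra.
move=> z [/RltP h1 /RltP h2]; apply: He; apply/RltP; apply: Rabs_def1; apply/RltP; rewrite ?RminusE ?RoppE; lra.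
Qed.

Lemma dpl_loc_unique (Th : R -> Prop) (f g : R -> R) t l1 l2 :
  Theta_open_interval Th -> Th t -> (forall s, Th s -> f s = g s) ->
  derivable_pt_lim f t l1 -> derivable_pt_lim g t l2 -> l1 = l2.
Proof.
move=> HTh Ht e h1 h2.
have [a [b [hab Hab]]] := open_nbhd HTh Ht.
apply: (uniqueness_limite g t) h2.
apply: (derivable_pt_lim_locally_ext f g t a b) hab _ h1.
by move=> z hz; apply: e; apply: Hab.
Qed.

Lemma cderiv_loc_unique (Th : R -> Prop) (f g : R -> Cplx) t l1 l2 :
  Theta_open_interval Th -> Th t -> (forall s, Th s -> f s = g s) ->
  cderiv_at f l1 t -> cderiv_at g l2 t -> l1 = l2.
Proof.
move=> HTh Ht e [h1 h2] [h3 h4]; apply: cplx_ext.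
- by apply: (dpl_loc_unique HTh Ht _ h1 h3) => s hs; rewrite e.
- by apply: (dpl_loc_unique HTh Ht _ h2 h4) => s hs; rewrite e.
Qed.

Lemma cderiv_loc_const (Th : R -> Prop) (f : R -> Cplx) c t l :
  Theta_open_interval Th -> Th t -> (forall s, Th s -> f s = c) ->
  cderiv_at f l t -> l = 0.
Proof.
move=> HTh Ht e h; apply: (cderiv_loc_unique HTh Ht e h); exact: cderiv_const.
Qed.

Lemma cderiv_loc_real (Th : R -> Prop) (f : R -> Cplx) t l :
  Theta_open_interval Th -> Th t -> (forall s, Th s -> complex.Im (f s) = 0) ->
  cderiv_at f l t -> complex.Im l = 0.
Proof.
move=> HTh Ht e [_ h].
apply: (dpl_loc_unique HTh Ht e h).
exact: derivable_pt_lim_const.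
Qed.

Lemma mderiv_ext m n (F G : R -> 'M[Cplx]_(m, n)) F' t :
  (forall s, F s = G s) -> mderiv_at F F' t -> mderiv_at G F' t.
Proof. move=> e h i j; apply: (cderiv_ext _ (h i j)) => s; by rewrite e. Qed.

Lemma mderiv_add m n (F G : R -> 'M[Cplx]_(m, n)) F' G' t :
  mderiv_at F F' t -> mderiv_at G G' t -> mderiv_at (fun s => F s + G s) (F' + G') t.
Proof.
move=> h1 h2 i j; rewrite mxE.
apply: (cderiv_ext _ (cderiv_add (h1 i j) (h2 i j))) => s; by rewrite mxE.
Qed.

Lemma mderiv_const m n (C : 'M[Cplx]_(m, n)) t : mderiv_at (fun _ => C) 0 t.
Proof. move=> i j; rewrite mxE; exact: cderiv_const. Qed.

Lemma mderiv_mul m n q (A : R -> 'M[Cplx]_(m, n)) (B : R -> 'M[Cplx]_(n, q)) A' B' t :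
  mderiv_at A A' t -> mderiv_at B B' t ->
  mderiv_at (fun s => A s *m B s) (A' *m B t + A t *m B') t.
Proof.
move=> h1 h2 i j; rewrite mxE !mxE -big_split /=.
apply: (cderiv_ext (f := fun s => \sum_(k < n) A s i k * B s k j)).
  by move=> s; rewrite mxE.
apply: cderiv_sum => k; exact: cderiv_mul.
Qed.

Lemma mderiv_adj m n (A : R -> 'M[Cplx]_(m, n)) A' t :
  mderiv_at A A' t -> mderiv_at (fun s => adj (A s)) (adj A') t.
Proof.
move=> h i j; rewrite !mxE.
apply: (cderiv_ext (f := fun s => (A s j i)^*)).
  by move=> s; rewrite !mxE.
exact: cderiv_conj.
Qed.

Lemma mderiv_sum m n (I : Type) (r : seq I) (F : I -> R -> 'M[Cplx]_(m, n)) F' t :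
  (forall k, mderiv_at (F k) (F' k) t) ->
  mderiv_at (fun s => \sum_(k <- r) F k s) (\sum_(k <- r) F' k) t.
Proof.
move=> h i j; rewrite summxE.
apply: (cderiv_ext (f := fun s => \sum_(k <- r) F k s i j)).
  by move=> s; rewrite summxE.
by apply: cderiv_sum => k; apply: h.
Qed.

Lemma mderiv_loc_unique (Th : R -> Prop) m n (F G : R -> 'M[Cplx]_(m, n)) F' G' t :
  Theta_open_interval Th -> Th t -> (forall s, Th s -> F s = G s) ->
  mderiv_at F F' t -> mderiv_at G G' t -> F' = G'.
Proof.
move=> HTh Ht e h1 h2; apply/matrixP => i j.
apply: (cderiv_loc_unique HTh Ht _ (h1 i j) (h2 i j)) => s hs; by rewrite e.
Qed.


Lemma adjE m n (A : 'M[Cplx]_(m, n)) i j : adj A i j = (A j i)^*.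
Proof. by rewrite !mxE. Qed.

Lemma adj_mul m n q (A : 'M[Cplx]_(m, n)) (B : 'M[Cplx]_(n, q)) :
  adj (A *m B) = adj B *m adj A.
Proof.
apply/matrixP => i j; rewrite !mxE rmorph_sum; apply: eq_bigr => k _.
by rewrite !mxE rmorphM mulrC.
Qed.

Lemma adjK m n (A : 'M[Cplx]_(m, n)) : adj (adj A) = A.
Proof. by apply/matrixP => i j; rewrite !adjE conjCK. Qed.

Lemma adjD m n (A B : 'M[Cplx]_(m, n)) : adj (A + B) = adj A + adj B.
Proof. by apply/matrixP => i j; rewrite !mxE rmorphD. Qed.

Lemma adjN m n (A : 'M[Cplx]_(m, n)) : adj (- A) = - adj A.
Proof. by apply/matrixP => i j; rewrite !mxE rmorphN. Qed.

Lemma adjB m n (A B : 'M[Cplx]_(m, n)) : adj (A - B) = adj A - adj B.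
Proof. by rewrite adjD adjN. Qed.

Lemma adjZ m n c (A : 'M[Cplx]_(m, n)) : adj (c *: A) = c^* *: adj A.
Proof. by apply/matrixP => i j; rewrite !mxE rmorphM. Qed.

Lemma adj0 m n : adj (0 : 'M[Cplx]_(m, n)) = 0.
Proof. by apply/matrixP => i j; rewrite !mxE rmorph0. Qed.

Lemma adj_sum m n (I : Type) (r : seq I) (F : I -> 'M[Cplx]_(m, n)) :
  adj (\sum_(k <- r) F k) = \sum_(k <- r) adj (F k).
Proof.
apply/matrixP => i j; rewrite !mxE !summxE rmorph_sum; apply: eq_bigr => k _.
by rewrite !mxE.
Qed.

Lemma braketE n (a b : 'cV[Cplx]_n) : braket a b = \sum_i (a i 0)^* * b i 0.
Proof. by rewrite /braket mxE; apply: eq_bigr => i _; rewrite adjE. Qed.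

Lemma braketJ n (a b : 'cV[Cplx]_n) : (braket a b)^* = braket b a.
Proof.
rewrite !braketE rmorph_sum; apply: eq_bigr => i _.
by rewrite rmorphM /= conjCK mulrC.
Qed.

Lemma braketDr n (a b c : 'cV[Cplx]_n) : braket a (b + c) = braket a b + braket a c.
Proof. by rewrite /braket mulmxDr mxE. Qed.
Lemma braketBr n (a b c : 'cV[Cplx]_n) : braket a (b - c) = braket a b - braket a c.
Proof. by rewrite /braket mulmxBr !mxE. Qed.
Lemma braketZr n (a b : 'cV[Cplx]_n) c : braket a (c *: b) = c * braket a b.
Proof. by rewrite /braket -scalemxAr mxE. Qed.
Lemma braketDl n (a b c : 'cV[Cplx]_n) : braket (a + b) c = braket a c + braket b c.
Proof. by rewrite /braket adjD mulmxDl mxE. Qed.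
Lemma braketBl n (a b c : 'cV[Cplx]_n) : braket (a - b) c = braket a c - braket b c.
Proof. by rewrite /braket adjB mulmxBl !mxE. Qed.
Lemma braketZl n (a b : 'cV[Cplx]_n) c : braket (c *: a) b = c^* * braket a b.
Proof. by rewrite /braket adjZ -scalemxAl mxE. Qed.
Lemma braket0r n (a : 'cV[Cplx]_n) : braket a 0 = 0.
Proof. by rewrite /braket mulmx0 mxE. Qed.
Lemma braket0l n (a : 'cV[Cplx]_n) : braket 0 a = 0.
Proof. by rewrite /braket adj0 mul0mx mxE. Qed.
Lemma braketMr n (a b : 'cV[Cplx]_n) (M : 'M[Cplx]_n) :
  braket a (M *m b) = braket (adj M *m a) b.
Proof. by rewrite /braket adj_mul adjK mulmxA. Qed.
Lemma braket_ketbra n (a b c d : 'cV[Cplx]_n) :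
  braket a (b *m adj c *m d) = braket a b * braket c d.
Proof.
rewrite /braket -mulmxA mulmxA mxE big_ord1.
by [].
Qed.

Lemma tr_ketbra n (a b : 'cV[Cplx]_n) : \tr (a *m adj b) = braket b a.
Proof. by rewrite mxtrace_mulC trace_mx11. Qed.

Lemma braket_ge0 n (a : 'cV[Cplx]_n) : 0 <= braket a a.
Proof.
rewrite braketE; apply: sumr_ge0 => i _; rewrite mulrC; exact: mul_conjC_ge0.
Qed.

Lemma braket_eq0 n (a : 'cV[Cplx]_n) : braket a a = 0 -> a = 0.
Proof.
rewrite braketE => h.
have hge : forall k : 'I_n, predT k -> 0 <= (a k 0)^* * a k 0.
  by move=> k _; rewrite mulrC; exact: mul_conjC_ge0.
apply/matrixP => i j; rewrite (ord1 j) mxE.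
have h1 := @psumr_eq0P _ _ predT (fun i => (a i 0)^* * a i 0) hge h i isT.
move: h1; rewrite mulrC => h2.
by apply/eqP; rewrite -mul_conjC_eq0 h2.
Qed.


Lemma conj_cR x : (cR x)^* = cR x.
Proof. by apply: cplx_ext; rewrite ?ReJ ?ImJ /= ?oppr0. Qed.
Lemma cRM x y : cR x * cR y = cR (x * y).
Proof. by apply: cplx_ext; rewrite ?ReM ?ImM /= ?mulr0 ?mul0r ?subr0 ?addr0. Qed.
Lemma cRD x y : cR x + cR y = cR (x + y).
Proof. by apply: cplx_ext; rewrite ?ReD ?ImD /= ?addr0. Qed.
Lemma cR0 : cR 0 = 0. Proof. by []. Qed.
Lemma cR_eq0 x : cR x = 0 -> x = 0.
Proof. by case. Qed.
Lemma conj2 : (2%:R : Cplx)^* = 2%:R.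
Proof. by rewrite rmorph_nat. Qed.

Lemma cR_sqrt x : 0 <= x -> cR (Num.sqrt x) * cR (Num.sqrt x) = cR x.
Proof. move=> hx; rewrite cRM; congr cR; have := sqr_sqrtr hx; rewrite expr2 => h; exact: h. Qed.

Lemma tr_sum n (I : Type) (r : seq I) (F : I -> 'M[Cplx]_n) :
  \tr (\sum_(k <- r) F k) = \sum_(k <- r) \tr (F k).
Proof. exact: raddf_sum. Qed.

Lemma braket_herm n (lam : 'M[Cplx]_n) (a b : 'cV[Cplx]_n) : Defs.hermitian lam ->
  braket a (lam *m b) = braket (lam *m a) b.
Proof. by move=> h; rewrite braketMr h. Qed.


Lemma core_identity D (lam rho drho : 'M[Cplx]_D) (u v : 'I_D -> 'cV[Cplx]_D) :
  Defs.hermitian lam ->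
  rho = \sum_k u k *m adj (u k) ->
  drho = \sum_k (v k *m adj (u k) + u k *m adj (v k)) ->
  drho = 2^-1 *: (rho *m lam + lam *m rho) ->
  4 * \sum_k braket (v k) (v k) - \tr (rho *m lam *m lam) =
  \sum_k braket (lam *m u k - 2%:R *: v k) (lam *m u k - 2%:R *: v k).
Proof.
move=> Hl Hr Hd HS.
set H := \tr (rho *m lam *m lam).
have T1 : H = \sum_k braket (lam *m u k) (lam *m u k).
  rewrite /H Hr !mulmx_suml tr_sum; apply: eq_bigr => k _.
  rewrite mxtrace_mulC !mulmxA -tr_ketbra adj_mul Hl !mulmxA.
  by [].
have T2 : \tr (lam *m drho) = \sum_k (braket (lam *m u k) (v k) + braket (v k) (lam *m u k)).
  rewrite Hd mulmx_sumr tr_sum; apply: eq_bigr => k _.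
  rewrite mulmxDr mxtraceD !mulmxA !tr_ketbra braket_herm //.
have T3 : \tr (lam *m drho) = H.
  rewrite HS -scalemxAr mxtraceZ mulmxDr mxtraceD.
  rewrite /H mxtrace_mulC -mulmxA [X in _ + X]mxtrace_mulC !mulmxA.
  rewrite -[in RHS](mulr1 (\tr _)) -[1 in RHS](@mulVf _ 2%:R) ?pnatr_eq0 //.
  have -> : \tr (lam *m rho *m lam) = \tr (rho *m lam *m lam).
    by rewrite mxtrace_mulC mulmxA mxtrace_mulC mulmxA.
  ring.
have T4 : forall k, braket (lam *m u k - 2%:R *: v k) (lam *m u k - 2%:R *: v k) =
   braket (lam *m u k) (lam *m u k) - 2%:R * (braket (lam *m u k) (v k) + braket (v k) (lam *m u k))
   + 4 * braket (v k) (v k).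
  move=> k; rewrite !braketBl !braketBr !braketZl !braketZr conj2; ring.
rewrite (eq_bigr _ (fun k _ => T4 k)) big_split sumrB /= -!mulr_sumr -T1 -T2 T3.
ring.
Qed.

Lemma ineq_from_identity (H CU : Cplx) D (x : 'I_D -> 'cV[Cplx]_D) :
  CU - H = \sum_k braket (x k) (x k) ->
  H <= CU /\ (H = CU <-> forall k, x k = 0).
Proof.
move=> e; split.
  by rewrite -subr_ge0 e; apply: sumr_ge0 => k _; exact: braket_ge0.
split.
  move=> hH k; apply: braket_eq0.
  have h0 : \sum_k braket (x k) (x k) = 0 by rewrite -e hH subrr.
  exact: (@psumr_eq0P _ _ predT (fun k => braket (x k) (x k)) (fun k _ => braket_ge0 (x k)) h0 k isT).
move=> hx.
have : CU - H = 0 by rewrite e big1 // => k _; rewrite hx braket0r.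
by move/eqP; rewrite subr_eq0 => /eqP ->.
Qed.

Lemma D_identity D (p : 'I_D -> R) (W dW u v : 'I_D -> 'cV[Cplx]_D) j k :
  (forall k, u k = cR (Num.sqrt (p k)) *: W k) ->
  (forall j k, braket (dW j) (W k) + braket (W j) (dW k) = 0) ->
  (forall j k, (braket (v j) (W k) + braket (u j) (dW k))^* = braket (v j) (W k) + braket (u j) (dW k)) ->
  (forall j k, j != k -> braket (v j) (W k) + braket (u j) (dW k) = 0) ->
  braket (v j) (u k) - braket (u j) (v k) =
    2%:R * cR (Num.sqrt (p j)) * cR (Num.sqrt (p k)) * braket (dW j) (W k).
Proof.
move=> Hu Hanti Hreal Hoff.
set e := fun j k => braket (v j) (W k) + braket (u j) (dW k).
set sc := fun k => cR (Num.sqrt (p k)).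
have Ha : forall j k, braket (W j) (dW k) = - braket (dW j) (W k).
  by move=> j0 k0; apply/eqP; rewrite -addr_eq0 addrC Hanti.
have E1 : forall j k, braket (v j) (W k) = e j k + sc j * braket (dW j) (W k).
  move=> j0 k0; rewrite /e Hu braketZl conj_cR Ha /sc; ring.
have E2 : braket (W j) (v k) = e k j - sc k * braket (dW j) (W k).
  rewrite -braketJ E1 rmorphD rmorphM /= Hreal conj_cR braketJ Ha /e /sc; ring.
have -> : braket (v j) (u k) = sc k * braket (v j) (W k) by rewrite Hu braketZr.
have -> : braket (u j) (v k) = sc j * braket (W j) (v k) by rewrite Hu braketZl conj_cR.
rewrite E1 E2.
case: (eqVneq j k) => [<-|njk]; first by rewrite /sc; ring.
rewrite /e Hoff // Hoff 1?eq_sym // /sc; ring.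
Qed.

Lemma mx11_braket n (a b : 'cV[Cplx]_n) : adj a *m b = (braket a b)%:M.
Proof. by apply/matrixP => i j; rewrite (ord1 i) (ord1 j) [RHS]mxE /braket mulr1n. Qed.

Lemma rho_W D (p : 'I_D -> R) (W : 'I_D -> 'cV[Cplx]_D) j :
  (forall j k, braket (W j) (W k) = (j == k)%:R) ->
  (\sum_k cR (p k) *: ketbra (W k) (W k)) *m W j = cR (p j) *: W j.
Proof.
move=> HWW; rewrite mulmx_suml (bigD1 j) //= big1 ?addr0.
  by rewrite /ketbra -scalemxAl -mulmxA mx11_braket HWW eqxx mul_mx_scalar scale1r.
move=> m hm; rewrite /ketbra -scalemxAl -mulmxA mx11_braket HWW (negbTE hm).
by rewrite mul_mx_scalar scale0r scaler0.
Qed.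

Lemma rho_herm D (p : 'I_D -> R) (W : 'I_D -> 'cV[Cplx]_D) :
  adj (\sum_k cR (p k) *: ketbra (W k) (W k)) = \sum_k cR (p k) *: ketbra (W k) (W k).
Proof.
rewrite adj_sum; apply: eq_bigr => k _.
by rewrite adjZ conj_cR /ketbra adj_mul adjK.
Qed.

Lemma rho_u D (p : 'I_D -> R) (W u : 'I_D -> 'cV[Cplx]_D) :
  (forall k, 0 <= p k) ->
  (forall k, u k = cR (Num.sqrt (p k)) *: W k) ->
  \sum_k cR (p k) *: ketbra (W k) (W k) = \sum_k u k *m adj (u k).
Proof.
move=> Hp0 Hu; apply: eq_bigr => k _.
by rewrite Hu adjZ conj_cR -scalemxAl -scalemxAr scalerA cR_sqrt.
Qed.

Lemma braket_sumr n (I : Type) (r : seq I) (a : 'cV[Cplx]_n) (F : I -> 'cV[Cplx]_n) :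
  braket a (\sum_(i <- r) F i) = \sum_(i <- r) braket a (F i).
Proof. by rewrite /braket mulmx_sumr summxE. Qed.

Lemma two_neq0 : (2%:R : Cplx) != 0.
Proof. by rewrite pnatr_eq0. Qed.

Lemma core_char D (lam rho drho : 'M[Cplx]_D) (p : 'I_D -> R)
  (W dW u v : 'I_D -> 'cV[Cplx]_D) :
  Defs.hermitian lam ->
  (forall k, 0 <= p k) ->
  (forall j k, braket (W j) (W k) = (j == k)%:R) ->
  (forall k, u k = cR (Num.sqrt (p k)) *: W k) ->
  rho = \sum_k cR (p k) *: ketbra (W k) (W k) ->
  drho = \sum_k (v k *m adj (u k) + u k *m adj (v k)) ->
  drho = 2^-1 *: (rho *m lam + lam *m rho) ->
  (forall j k, braket (dW j) (W k) + braket (W j) (dW k) = 0) ->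
  (forall j k, (braket (v j) (W k) + braket (u j) (dW k))^* = braket (v j) (W k) + braket (u j) (dW k)) ->
  (forall j k, j != k -> braket (v j) (W k) + braket (u j) (dW k) = 0) ->
  (forall j k, p j = 0 -> braket (v j) (W k) + braket (u j) (dW k) = 0) ->
  (forall x : 'cV[Cplx]_D, (forall j, braket (W j) x = 0) -> x = 0) ->
  (forall k, lam *m u k - 2%:R *: v k = 0) <->
  (forall j k, 0 < p j -> 0 < p k -> braket (dW j) (W k) = 0).
Proof.
move=> Hl Hp0 HWW Hu Hrho Hd HS Hanti Hreal Hoff Hzero Hbasis.
set sc := fun k => cR (Num.sqrt (p k)).
have Dj := fun j k => D_identity j k Hu Hanti Hreal Hoff.
have sc_neq0 : forall k, 0 < p k -> sc k != 0.
  move=> k hk; apply/eqP => /cR_eq0 /eqP; rewrite gt_eqF //; by rewrite sqrtr_gt0.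
have Huu : forall m k, braket (u m) (u k) = (m == k)%:R * cR (p k).
  move=> m k; rewrite !Hu braketZl braketZr conj_cR HWW.
  case: (eqVneq m k) => [->|hmk]; last by rewrite !mulr0 mul0r.
  by rewrite mulr1 mul1r cR_sqrt.
have HWu : forall j m, braket (W j) (u m) = (j == m)%:R * sc m.
  by move=> j m; rewrite Hu braketZr HWW mulrC.
split.
  move=> hx j k hj hk.
  have hj' : lam *m u j = 2%:R *: v j by apply/eqP; rewrite -subr_eq0 hx.
  have hk' : lam *m u k = 2%:R *: v k by apply/eqP; rewrite -subr_eq0 hx.
  have eq : braket (v j) (u k) = braket (u j) (v k).
    have := braket_herm (u j) (u k) Hl.
    rewrite hj' hk' braketZl braketZr conj2 => /(mulfI two_neq0) ->; by [].
  have := Dj j k; rewrite eq subrr => /esym /eqP.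
  rewrite !mulf_eq0 (negbTE two_neq0) (negbTE (sc_neq0 _ hj)) (negbTE (sc_neq0 _ hk)) /=.
  by move/eqP.
move=> hc k.
have [pk0|pk0] : p k = 0 \/ 0 < p k.
  by move: (Hp0 k); rewrite le0r => /orP [/eqP ->|->]; [left|right].
  have u0 : u k = 0 by rewrite Hu pk0 sqrtr0 cR0 scale0r.
  have v0 : v k = 0.
    apply: Hbasis => j; rewrite -braketJ.
    have := Hzero k j pk0; rewrite u0 braket0l addr0 => ->.
    by rewrite rmorph0.
  by rewrite u0 v0 mulmx0 scaler0 subrr.
apply: Hbasis => j.
have rhoW : forall j, rho *m W j = cR (p j) *: W j by move=> j0; rewrite Hrho rho_W.
have rhoH : adj rho = rho by rewrite Hrho rho_herm.
have rhou : rho *m u k = cR (p k) *: u k.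
  by rewrite Hu -scalemxAr rhoW !scalerA mulrC.
have Q1 : braket (W j) (drho *m u k) = 2^-1 * (cR (p j) + cR (p k)) * braket (W j) (lam *m u k).
  rewrite HS -scalemxAl braketZr mulmxDl braketDr -!mulmxA braketMr rhoH rhoW braketZl conj_cR.
  by rewrite rhou -scalemxAr braketZr; ring.
have Q2 : braket (W j) (drho *m u k) =
    braket (W j) (v k) * cR (p k) + sc j * braket (v j) (u k).
  rewrite Hd mulmx_suml braket_sumr.
  rewrite (eq_bigr (fun m => braket (W j) (v m) * braket (u m) (u k)
                      + braket (W j) (u m) * braket (v m) (u k))); last first.
    by move=> m _; rewrite mulmxDl braketDr !braket_ketbra.
  rewrite big_split /=; congr (_ + _).
    rewrite (bigD1 k) //= big1 ?addr0; first by rewrite Huu eqxx mul1r.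
    by move=> m hm; rewrite Huu (negbTE hm) mul0r mulr0.
  rewrite (bigD1 j) //= big1 ?addr0; first by rewrite HWu eqxx mul1r.
  by move=> m hm; rewrite HWu eq_sym (negbTE hm) !mul0r.
have Djk := Dj j k.
have Huv : braket (u j) (v k) = sc j * braket (W j) (v k) by rewrite Hu braketZl conj_cR.
have Z : cR (p j) * braket (dW j) (W k) = 0.
  have [pj0|pj0] : p j = 0 \/ 0 < p j.
    by move: (Hp0 j); rewrite le0r => /orP [/eqP ->|->]; [left|right].
    by rewrite pj0 cR0 mul0r.
  by rewrite hc // mulr0.
have hpj : sc j * sc j = cR (p j) by rewrite cR_sqrt.
set X := braket (W j) (lam *m u k).
set Y := braket (W j) (v k).
set P := cR (p j) + cR (p k).
have E : 2^-1 * P * X = P * Y.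
  rewrite -Q1 Q2.
  have -> : braket (v j) (u k) = braket (u j) (v k) + 2%:R * sc j * sc k * braket (dW j) (W k).
    by rewrite -Djk; ring.
  rewrite Huv.
  transitivity (Y * cR (p k) + (sc j * sc j) * Y + 2%:R * sc k * ((sc j * sc j) * braket (dW j) (W k))).
    by rewrite /Y; ring.
  by rewrite hpj Z /P /Y; ring.
have hP : P != 0.
  rewrite /P cRD; apply/eqP => /cR_eq0 /eqP.
  by rewrite gt_eqF // ltr_wpDl.
have h2 : 2%:R * 2^-1 = 1 :> Cplx by rewrite mulfV // two_neq0.
have : P * (X - 2%:R * Y) = 0.
  transitivity (P * X - 2%:R * (P * Y)); first by ring.
  rewrite -E. transitivity (P * X * (1 - 2%:R * 2^-1)); first ring.
  by rewrite h2 subrr mulr0.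
move/eqP; rewrite mulf_eq0 (negbTE hP) /= => /eqP.
by rewrite braketBr braketZr.
Qed.


Lemma conj_Im0 (x : Cplx) : complex.Im x = 0 -> x^* = x.
Proof. by move=> h; apply: cplx_ext; [rewrite ReJ | rewrite ImJ h oppr0]. Qed.

Lemma basis_lemma D (W : 'I_D -> 'cV[Cplx]_D) :
  (forall j k, braket (W j) (W k) = (j == k)%:R) ->
  forall x : 'cV[Cplx]_D, (forall j, braket (W j) x = 0) -> x = 0.
Proof.
move=> HWW x hx.
set Wm := \matrix_(i, j) W j i 0 : 'M[Cplx]_D.
have h1 : adj Wm *m Wm = 1%:M.
  apply/matrixP => j k; rewrite [RHS]mxE -HWW braketE mxE; apply: eq_bigr => i _.
  by rewrite adjE !mxE.
have h2 : adj Wm *m x = 0.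
  apply/matrixP => j i; rewrite (ord1 i) [RHS]mxE -(hx j) braketE mxE; apply: eq_bigr => l _.
  by rewrite adjE !mxE.
by rewrite -(mul1mx x) -(mulmx1C h1) -mulmxA h2 mulmx0.
Qed.

Theorem theorem2p3'
  (D : nat) (HD : (0 < D)%N)
  (Th : R -> Prop) (HTh : Theta_open_interval Th)
  (psi0 : 'cV[Cplx]_D) (Hpsi0 : braket psi0 psi0 = 1)
  (U dU : 'I_D -> R -> 'M[Cplx]_D)
  (p : 'I_D -> R -> R)
  (w dw : 'I_D -> R -> 'cV[Cplx]_D)
  (HdU : forall k t, Th t -> mderiv_at (U k) (dU k t) t)
  (Hdw : forall k t, Th t -> mderiv_at (w k) (dw k t) t)
  (Hcomplete : forall t, Th t -> \sum_(k < D) adj (U k t) *m U k t = 1%:M)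
  (Hcanon : forall t j k, Th t ->
     \tr (U k t *m ketbra psi0 psi0 *m adj (U j t)) = ((j == k)%:R * cR (p k t)))
  (Hw : forall t k, Th t -> U k t *m psi0 = cR (Num.sqrt (p k t)) *: w k t)
  (Horth : forall t j k, Th t -> braket (w j t) (w k t) = (j == k)%:R)
  (Hp : forall k, (forall t, Th t -> p k t = 0) \/ (forall t, Th t -> 0 < p k t))
  (drho : R -> 'M[Cplx]_D)
  (Hdrho : forall t, Th t ->
     mderiv_at (fun s => \sum_(k < D) cR (p k s) *: ketbra (w k s) (w k s))
               (drho t) t) :
  forall t, Th t ->
  forall lam : 'M[Cplx]_D,
    is_SLD (\sum_(k < D) cR (p k t) *: ketbra (w k t) (w k t)) (drho t) lam ->
    let H := SLD_info (\sum_(k < D) cR (p k t) *: ketbra (w k t) (w k t)) lam in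
    let CU := 4 * \sum_(k < D) \tr (dU k t *m ketbra psi0 psi0 *m adj (dU k t)) in
    H <= CU /\
    (H = CU <-> forall j k, 0 < p j t -> 0 < p k t -> braket (dw j t) (w k t) = 0).
Proof.
move=> t Ht lam [Hl HS] H CU.
have Hp0s : forall k s, Th s -> 0 <= p k s.
  by move=> k s hs; case: (Hp k) => h; [rewrite h | apply: ltW; apply: h].
have Hp0 : forall k, 0 <= p k t by move=> k; exact: Hp0s.
set W := fun k => w k t.
set dW := fun k => dw k t.
set u := fun k => U k t *m psi0.
set v := fun k => dU k t *m psi0.
have HWW : forall j k, braket (W j) (W k) = (j == k)%:R by move=> j k; exact: Horth.
have Hu : forall k, u k = cR (Num.sqrt (p k t)) *: W k by move=> k; exact: Hw.
have Hd : drho t = \sum_k (v k *m adj (u k) + u k *m adj (v k)).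
  have HG : mderiv_at (fun s => \sum_k (U k s *m psi0) *m adj (U k s *m psi0))
     (\sum_k ((dU k t *m psi0 + U k t *m 0) *m adj (U k t *m psi0)
              + (U k t *m psi0) *m adj (dU k t *m psi0 + U k t *m 0))) t.
    apply: mderiv_sum => k; apply: mderiv_mul.
      apply: mderiv_mul; [exact: HdU | exact: mderiv_const].
    apply: mderiv_adj; apply: mderiv_mul; [exact: HdU | exact: mderiv_const].
  have Heq : forall s, Th s -> \sum_k cR (p k s) *: ketbra (w k s) (w k s) =
                              \sum_k (U k s *m psi0) *m adj (U k s *m psi0).
    move=> s hs; apply: rho_u => k; [exact: Hp0s | exact: Hw].
  rewrite (mderiv_loc_unique HTh Ht Heq (Hdrho t Ht) HG).
  by apply: eq_bigr => k _; rewrite mulmx0 addr0.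
have Hanti : forall j k, braket (dW j) (W k) + braket (W j) (dW k) = 0.
  move=> j k.
  have HF := mderiv_mul (mderiv_adj (Hdw j t Ht)) (Hdw k t Ht) ord0 ord0.
  have := cderiv_loc_const HTh Ht (c := (j == k)%:R) _ HF.
  by rewrite mxE; apply => s hs; apply: Horth.
have He : forall j k, exists f : R -> Cplx,
    cderiv_at f (braket (v j) (W k) + braket (u j) (dW k)) t /\
    forall s, Th s -> f s = cR (if j == k then Num.sqrt (p j s) else 0).
  move=> j k.
  have HF := mderiv_mul (mderiv_adj (mderiv_mul (HdU j t Ht) (mderiv_const psi0 t))) (Hdw k t Ht) ord0 ord0.
  eexists; split.
    by rewrite mulmx0 addr0 mxE in HF; exact: HF.
  move=> s hs /=; rewrite -/(braket _ _) Hw // braketZl conj_cR Horth //.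
  by case: (j == k); rewrite ?mulr1 ?mulr0.
have Hreal : forall j k, (braket (v j) (W k) + braket (u j) (dW k))^* =
                        braket (v j) (W k) + braket (u j) (dW k).
  move=> j k; apply: conj_Im0; have [f [hf hfs]] := He j k.
  by apply: (cderiv_loc_real HTh Ht _ hf) => s hs; rewrite hfs.
have Hoff : forall j k, j != k -> braket (v j) (W k) + braket (u j) (dW k) = 0.
  move=> j k hjk; have [f [hf hfs]] := He j k.
  by apply: (cderiv_loc_const (c := 0) HTh Ht _ hf) => s hs; rewrite hfs // (negbTE hjk).
have Hzero : forall j k, p j t = 0 -> braket (v j) (W k) + braket (u j) (dW k) = 0.
  move=> j k hj; have [f [hf hfs]] := He j k.
  have hj' : forall s, Th s -> p j s = 0.
    case: (Hp j) => // h; by move: (h t Ht); rewrite hj ltxx.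
  apply: (cderiv_loc_const (c := 0) HTh Ht _ hf) => s hs; rewrite hfs // hj' // sqrtr0.
  by case: (j == k).
have Hbasis := basis_lemma HWW.
have HCU : CU = 4 * \sum_k braket (v k) (v k).
  rewrite /CU; congr (_ * _); apply: eq_bigr => k _.
  by rewrite /v -tr_ketbra adj_mul /ketbra !mulmxA.
have Hrho_u := rho_u Hp0 Hu.
have Hid := core_identity Hl Hrho_u Hd HS.
have E : CU - H = \sum_k braket (lam *m u k - 2%:R *: v k) (lam *m u k - 2%:R *: v k).
  by rewrite HCU /H /SLD_info Hid.
have [Hle Heqv] := ineq_from_identity E.
split => //; rewrite Heqv.
exact: (core_char Hl Hp0 HWW Hu (erefl _) Hd HS Hanti Hreal Hoff Hzero Hbasis).
Qed.


Unset Implicit Arguments.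
Set Strict Implicit.


Theorem theorem2p3
  (D : nat) (HD : (0 < D)%N)
  (Th : R -> Prop) (HTh : Theta_open_interval Th)
  (psi0 : 'cV[Cplx]_D) (Hpsi0 : braket psi0 psi0 = 1)
  (U dU : 'I_D -> R -> 'M[Cplx]_D)
  (p : 'I_D -> R -> R)
  (w dw : 'I_D -> R -> 'cV[Cplx]_D)
  (HdU : forall k t, Th t -> mderiv_at (U k) (dU k t) t)
  (Hdw : forall k t, Th t -> mderiv_at (w k) (dw k t) t)
  (Hcomplete : forall t, Th t -> \sum_(k < D) adj (U k t) *m U k t = 1%:M)
  (Hcanon : forall t j k, Th t ->
     \tr (U k t *m ketbra psi0 psi0 *m adj (U j t)) = ((j == k)%:R * cR (p k t)))
  (Hw : forall t k, Th t -> U k t *m psi0 = cR (Num.sqrt (p k t)) *: w k t)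
  (Horth : forall t j k, Th t -> braket (w j t) (w k t) = (j == k)%:R)
  (Hp : forall k, (forall t, Th t -> p k t = 0) \/ (forall t, Th t -> 0 < p k t))
  (drho : R -> 'M[Cplx]_D)
  (Hdrho : forall t, Th t ->
     mderiv_at (fun s => \sum_(k < D) cR (p k s) *: ketbra (w k s) (w k s))
               (drho t) t) :
  forall t, Th t ->
  forall lam : 'M[Cplx]_D,
    is_SLD (\sum_(k < D) cR (p k t) *: ketbra (w k t) (w k t)) (drho t) lam ->
    let H := SLD_info (\sum_(k < D) cR (p k t) *: ketbra (w k t) (w k t)) lam in
    let CU := 4 * \sum_(k < D) \tr (dU k t *m ketbra psi0 psi0 *m adj (dU k t)) in
    H <= CU /\
    (H = CU <-> forall j k, 0 < p j t -> 0 < p k t -> braket (dw j t) (w k t) = 0).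
Proof.
intros t Ht lam HS.
exact (theorem2p3' HD HTh Hpsi0 HdU Hdw Hcomplete Hcanon Hw Horth Hp Hdrho Ht HS).
Qed.
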